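(* Let $\Bbbk$ be a field, $n\ge2$, $q\in\Bbbk$ a primitive $n$-th root of unity, $T_n(q)$ the Taft algebra and $A$ a unital associative $\Bbbk$-algebra. Let $\cdot:T_n(q)\otimes A\to A$ be a partial action with $g\cdot1_A=0$. Then: (i) $(x\cdot1_A)^n\in Z(A)$; (ii) $g^i\cdot(x\cdot1_A)=q^{-i}(g^i\cdot1_A)(x\cdot1_A)$ for all $0\le i\le n-1$; (iii) if there is $i\in\{2,\dots,n-1\}$ such that $g^i\cdot a=a$ for all $a\in A$, then $x\cdot1_A=0$.
   Context: The Taft algebra $T_n(q)$ is the Hopf algebra generated by $g,x$ with relations $g^n=1$, $x^n=0$, $xg=qgx$, $g$ group-like, $\Delta(x)=x\otimes1+g\otimes x$, $\varepsilon(x)=0$. $Z(A)$ is the center of $A$. A partial action of a bialgebra $H$ on $A$ is a linear map $\cdot:H\otimes A\to A$ with $1_H\cdot a=a$, $h\cdot(ab)=(h_1\cdot a)(h_2\cdot b)$, $h\cdot(k\cdot a)=(h_1\cdot1_A)(h_2k\cdot a)$. *)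

(* Defs.v *)
From HB Require Import structures.
From mathcomp Require Import all_boot all_order all_algebra.
Set Implicit Arguments. Unset Strict Implicit. Unset Printing Implicit Defensive.
Import Order.TTheory GRing.Theory Num.Theory.
Local Open Scope ring_scope.

(* The Taft algebra T_n(q) over a field k, as a k-vector space with basis
   g^i x^j (0 <= i, j < n): an element is its coefficient function
   (i, j) |-> coefficient of g^i x^j.  The tensor square T_n(q) (x) T_n(q)
   is represented by coefficient functions on pairs of basis indices. *)
Notation taft k n := {ffun 'I_n * 'I_n -> k^o}.
Notation taft2 k n := {ffun ('I_n * 'I_n) * ('I_n * 'I_n) -> k^o}.

Section Taft.
Variables (k : fieldType) (n : nat) (q : k).
Local Notation taft := (taft k n).
Local Notation taft2 := (taft2 k n).

(* the element g^i x^j, for arbitrary naturals i j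
   (using g^n = 1 and x^n = 0) *)
Definition taftGX (i j : nat) : taft :=
  [ffun w : 'I_n * 'I_n =>
     if (val w.1 == (i %% n)%N) && (val w.2 == j) then 1 else 0].

Definition taftE (u : 'I_n * 'I_n) : taft := taftGX u.1 u.2.

Definition taft_one : taft := taftGX 0 0.

(* multiplication: g^i x^j * g^k x^l = q^(j k) g^(i+k) x^(j+l),
   from x g = q g x *)
Definition taft_mul (h h' : taft) : taft :=
  \sum_(u : 'I_n * 'I_n) \sum_(v : 'I_n * 'I_n)
     (h u * h' v * q ^+ (u.2 * v.1)%N) *: taftGX (u.1 + v.1)%N (u.2 + v.2)%N.

Definition tens (h h' : taft) : taft2 := [ffun p => h p.1 * h' p.2].

Definition taft2_mul (T T' : taft2) : taft2 :=
  \sum_(p : ('I_n * 'I_n) * ('I_n * 'I_n))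
  \sum_(p' : ('I_n * 'I_n) * ('I_n * 'I_n))
     (T p * T' p') *: tens (taft_mul (taftE p.1) (taftE p'.1))
                           (taft_mul (taftE p.2) (taftE p'.2)).

Definition taft2_exp (T : taft2) (m : nat) : taft2 :=
  iter m (taft2_mul T) (tens taft_one taft_one).

Definition Delta_g : taft2 := tens (taftGX 1 0) (taftGX 1 0).
Definition Delta_x : taft2 :=
  tens (taftGX 0 1) taft_one + tens (taftGX 1 0) (taftGX 0 1).

(* Delta is an algebra map: Delta(g^i x^j) = Delta(g)^i Delta(x)^j,
   extended linearly *)
Definition taft_Delta (h : taft) : taft2 :=
  \sum_(u : 'I_n * 'I_n)
    h u *: taft2_mul (taft2_exp Delta_g u.1) (taft2_exp Delta_x u.2).

End Taft.

(* A partial action of T_n(q) on a k-algebra A, given as a map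
   act : T_n(q) -> A -> A that is bilinear (i.e. a linear map
   T_n(q) (x) A -> A), satisfying
   1_H . a = a,
   h . (a b) = (h_1 . a)(h_2 . b),
   h . (h' . a) = (h_1 . 1_A)(h_2 h' . a). *)
Definition partial_action (k : fieldType) (n : nat) (q : k) (A : algType k)
    (act : taft k n -> A -> A) : Prop :=
  [/\ (forall (c : k) (h h' : taft k n) (a : A),
          act (c *: h + h') a = c *: act h a + act h' a),
      (forall (c : k) (h : taft k n) (a b : A),
          act h (c *: a + b) = c *: act h a + act h b),
      (forall a : A, act (taft_one k n) a = a),
      (forall (h : taft k n) (a b : A),
          act h (a * b) =
          \sum_(p : ('I_n * 'I_n) * ('I_n * 'I_n))
             taft_Delta q h p *: (act (taftE k p.1) a * act (taftE k p.2) b))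
    & (forall (h h' : taft k n) (a : A),
          act h (act h' a) =
          \sum_(p : ('I_n * 'I_n) * ('I_n * 'I_n))
             taft_Delta q h p *:
               (act (taftE k p.1) 1 * act (taft_mul q (taftE k p.2) h') a))].

(* Main.v *)
Require Import Defs.
From HB Require Import structures.
From mathcomp Require Import all_boot all_order all_algebra.
Set Implicit Arguments. Unset Strict Implicit. Unset Printing Implicit Defensive.
Import Order.TTheory GRing.Theory Num.Theory.
Local Open Scope ring_scope.

Section Infra.
Variables (K : fieldType) (m : nat) (q : K).
Local Notation N := m.+2.
Local Notation GX := (taftGX K N).
Hypothesis qN : q ^+ N = 1.

Lemma sum1 (R : pzRingType) (T : finType) (V : lmodType R) (c : T) (F : T -> V) :
  \sum_(p : T) ((p == c)%:R : R) *: F p = F c.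
Proof.
rewrite (bigD1 c) //= eqxx scale1r big1 ?addr0 // => p /negbTE ->.
by rewrite scale0r.
Qed.

Definition idx (i j : nat) : 'I_N * 'I_N := (inord (i %% N)%N, inord j).

Lemma GXE i j w : GX i j w = ((val w.1 == i %% N)%N && (val w.2 == j))%:R.
Proof. by rewrite ffunE; case: ifP. Qed.

Lemma GX_idx i j w : (j < N)%N -> GX i j w = (w == idx i j)%:R.
Proof.
move=> hj; case: w => a b; rewrite GXE /idx xpair_eqE -!val_eqE /= !inordK // ltn_mod //.
Qed.

Lemma GX_eqmod i i' j : (i %% N = i' %% N)%N -> GX i j = GX i' j.
Proof. by move=> h; apply/ffunP => w; rewrite !ffunE h. Qed.

Lemma GX_big i j : (N <= j)%N -> GX i j = 0.
Proof.
move=> hj; apply/ffunP => w; rewrite !ffunE.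
have /ltn_eqF -> : (w.2 < j)%N by apply: leq_trans (ltn_ord _) hj.
by rewrite andbF.
Qed.

Lemma E_idx i j : (j < N)%N -> taftE K (idx i j) = GX i j.
Proof.
move=> hj; rewrite /taftE /= !inordK ?ltn_mod //.
by apply: GX_eqmod; rewrite modn_mod.
Qed.

Lemma mulGX i j k l :
  taft_mul q (GX i j) (GX k l) = q ^+ (j * k) *: GX (i + k) (j + l).
Proof.
case: (ltnP j N) => hj; last first.
  have hjl : (N <= j + l)%N by rewrite (leq_trans hj) ?leq_addr.
  rewrite GX_big // (GX_big _ hjl) scaler0.
  by rewrite /taft_mul big1 // => u _; rewrite big1 // => v _; rewrite ffunE !mul0r scale0r.
case: (ltnP l N) => hl; last first.
  have hjl : (N <= j + l)%N by rewrite (leq_trans hl) ?leq_addl.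
  rewrite (GX_big k hl) (GX_big _ hjl) scaler0.
  rewrite /taft_mul big1 // => u _; rewrite big1 // => v _.
  have -> : (0 : taft K N) v = 0 by rewrite ffunE.
  by rewrite mulr0 mul0r scale0r.
rewrite /taft_mul.
under eq_bigr => u _ do under eq_bigr => v _ do
  rewrite (GX_idx _ _ hj) (GX_idx _ _ hl) -!scalerA.
under eq_bigr => u _ do rewrite -scaler_sumr.
rewrite sum1 sum1 /= !inordK ?ltn_mod //.
rewrite -(expr_mod _ qN) modnMmr (expr_mod _ qN).
by rewrite (@GX_eqmod _ (i + k)) // modnDm.
Qed.

Lemma tensGX i j k l p : (j < N)%N -> (l < N)%N ->
  tens (GX i j) (GX k l) p = (p == (idx i j, idx k l))%:R.
Proof.
move=> hj hl; case: p => a b; rewrite ffunE /= (GX_idx _ _ hj) (GX_idx _ _ hl) xpair_eqE.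
by case: (a == _); case: (b == _); rewrite ?mulr1 ?mulr0.
Qed.

Lemma t2mul_tens i j k l i' j' k' l' :
  (j < N)%N -> (l < N)%N -> (j' < N)%N -> (l' < N)%N ->
  taft2_mul q (tens (GX i j) (GX k l)) (tens (GX i' j') (GX k' l')) =
  tens (taft_mul q (GX i j) (GX i' j')) (taft_mul q (GX k l) (GX k' l')).
Proof.
move=> hj hl hj' hl'; rewrite /taft2_mul.
under eq_bigr => p _ do under eq_bigr => p' _ do rewrite !tensGX // -scalerA.
under eq_bigr => p _ do rewrite -scaler_sumr.
by rewrite sum1 sum1 /= !E_idx.
Qed.

Lemma t2mul_addl (T T' S : taft2 K N) :
  taft2_mul q (T + T') S = taft2_mul q T S + taft2_mul q T' S.
Proof.
rewrite /taft2_mul -big_split; apply: eq_bigr => p _.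
by rewrite -big_split; apply: eq_bigr => p' _; rewrite ffunE mulrDl scalerDl.
Qed.

Lemma t2mul_addr (T T' S : taft2 K N) :
  taft2_mul q S (T + T') = taft2_mul q S T + taft2_mul q S T'.
Proof.
rewrite /taft2_mul -big_split; apply: eq_bigr => p _.
by rewrite -big_split; apply: eq_bigr => p' _; rewrite ffunE mulrDr scalerDl.
Qed.

Lemma expDg r : taft2_exp q (Delta_g K N) r = tens (GX r 0) (GX r 0).
Proof.
elim: r => [//|r IH].
rewrite /taft2_exp iterS -/(taft2_exp q (Delta_g K N) r) IH /Delta_g.
by rewrite t2mul_tens // !mulGX !mul0n expr0 !scale1r add1n.
Qed.

Lemma expDx1 : taft2_exp q (Delta_x K N) 1 = Delta_x K N.
Proof.
rewrite /taft2_exp /= /Delta_x /taft_one t2mul_addl !t2mul_tens //.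
by rewrite !mulGX !muln0 !expr0 !scale1r !addn0.
Qed.

Lemma DeltaGX i j : (j < N)%N ->
  taft_Delta q (GX i j) = taft2_mul q (taft2_exp q (Delta_g K N) (i %% N)%N)
                                    (taft2_exp q (Delta_x K N) j).
Proof.
move=> hj; rewrite /taft_Delta; under eq_bigr => u _ do rewrite GX_idx //.
by rewrite sum1 /= !inordK // ltn_mod.
Qed.

Lemma Delta_g_i i : taft_Delta q (GX i 0) = tens (GX i 0) (GX i 0).
Proof.
rewrite DeltaGX // expDg /taft2_exp /= /taft_one t2mul_tens //.
rewrite !mulGX !muln0 expr0 !scale1r !addn0.
by rewrite (@GX_eqmod (i %% N) i) // modn_mod.
Qed.

Lemma Delta_gx_i i : taft_Delta q (GX i 1) =
  tens (GX i 1) (GX i 0) + tens (GX i.+1 0) (GX i 1).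
Proof.
rewrite DeltaGX // expDg expDx1 /Delta_x /taft_one t2mul_addr !t2mul_tens //.
rewrite !mulGX !muln0 !expr0 !scale1r !addn0 !add0n.
have e1 : (i %% N %% N = i %% N)%N by rewrite modn_mod.
rewrite (@GX_eqmod (i %% N) i 0) // (@GX_eqmod (i %% N) i 1) //.
by rewrite (@GX_eqmod (i %% N + 1) i.+1) // modnDml addn1.
Qed.


Variables (A : algType K) (act : taft K N -> A -> A).
Hypothesis PA : partial_action q act.

Lemma act_linl c h h' a : act (c *: h + h') a = c *: act h a + act h' a.
Proof. by case: PA. Qed.
Lemma act_linr c h a b : act h (c *: a + b) = c *: act h a + act h b.
Proof. by case: PA. Qed.
Lemma act1 a : act (GX 0 0) a = a.
Proof. by case: PA => _ _ H _ _; apply: H. Qed.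
Lemma actM h a b : act h (a * b) =
  \sum_(p : ('I_N * 'I_N) * ('I_N * 'I_N))
     taft_Delta q h p *: (act (taftE K p.1) a * act (taftE K p.2) b).
Proof. by case: PA. Qed.
Lemma actA h h' a : act h (act h' a) =
  \sum_(p : ('I_N * 'I_N) * ('I_N * 'I_N))
     taft_Delta q h p *: (act (taftE K p.1) 1 * act (taft_mul q (taftE K p.2) h') a).
Proof. by case: PA. Qed.

Lemma act0l a : act 0 a = 0.
Proof.
have H := act_linl 1 0 0 a; rewrite !scale1r addr0 in H.
by apply: (@addrI _ (act 0 a)); rewrite addr0 -H.
Qed.
Lemma actZl c h a : act (c *: h) a = c *: act h a.
Proof. by have := act_linl c h 0 a; rewrite !addr0 act0l addr0. Qed.
Lemma actDl h h' a : act (h + h') a = act h a + act h' a.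
Proof. by have := act_linl 1 h h' a; rewrite !scale1r. Qed.
Lemma act0r h : act h 0 = 0.
Proof.
have H := act_linr 1 h 0 0; rewrite !scale1r addr0 in H.
by apply: (@addrI _ (act h 0)); rewrite addr0 -H.
Qed.
Lemma actZr c h a : act h (c *: a) = c *: act h a.
Proof. by have := act_linr c h a 0; rewrite !addr0 act0r addr0. Qed.
Lemma actDr h a b : act h (a + b) = act h a + act h b.
Proof. by have := act_linr 1 h a b; rewrite !scale1r. Qed.
Lemma actBr h a b : act h (a - b) = act h a - act h b.
Proof.
by rewrite [a - b]addrC -scaleN1r act_linr scaleN1r addrC.
Qed.

Lemma sumT (V : lmodType K^o) i j k l (F : taft K N -> taft K N -> V) :
  (j < N)%N -> (l < N)%N ->
  \sum_(p : ('I_N * 'I_N) * ('I_N * 'I_N))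
     tens (GX i j) (GX k l) p *: F (taftE K p.1) (taftE K p.2) = F (GX i j) (GX k l).
Proof.
move=> hj hl; under eq_bigr => p _ do rewrite tensGX //.
by rewrite sum1 /= !E_idx.
Qed.

Lemma sumT2 (V : lmodType K^o) (T T' : taft2 K N) (F : _ -> V) :
  \sum_(p : ('I_N * 'I_N) * ('I_N * 'I_N)) (T + T') p *: F p =
  \sum_(p : ('I_N * 'I_N) * ('I_N * 'I_N)) T p *: F p +
  \sum_(p : ('I_N * 'I_N) * ('I_N * 'I_N)) T' p *: F p.
Proof. by rewrite -big_split; apply: eq_bigr => p _; rewrite ffunE scalerDl. Qed.

Lemma act_gM i a b : act (GX i 0) (a * b) = act (GX i 0) a * act (GX i 0) b.
Proof.
rewrite actM Delta_g_i.
by rewrite (@sumT A i 0 i 0 (fun X Y => act X a * act Y b)).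
Qed.

Lemma act_gA i h' a :
  act (GX i 0) (act h' a) = act (GX i 0) 1 * act (taft_mul q (GX i 0) h') a.
Proof.
rewrite actA Delta_g_i.
by rewrite (@sumT A i 0 i 0 (fun X Y => act X 1 * act (taft_mul q Y h') a)).
Qed.

Lemma act_gxM i a b : act (GX i 1) (a * b) =
  act (GX i 1) a * act (GX i 0) b + act (GX i.+1 0) a * act (GX i 1) b.
Proof.
rewrite actM Delta_gx_i sumT2.
by rewrite (@sumT A i 1 i 0 (fun X Y => act X a * act Y b)) // (@sumT A i.+1 0 i 1 (fun X Y => act X a * act Y b)).
Qed.

Lemma act_gxA i h' a : act (GX i 1) (act h' a) =
  act (GX i 1) 1 * act (taft_mul q (GX i 0) h') a +
  act (GX i.+1 0) 1 * act (taft_mul q (GX i 1) h') a.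
Proof.
rewrite actA Delta_gx_i sumT2.
by rewrite (@sumT A i 1 i 0 (fun X Y => act X 1 * act (taft_mul q Y h') a)) //
   (@sumT A i.+1 0 i 1 (fun X Y => act X 1 * act (taft_mul q Y h') a)).
Qed.


Hypothesis g10 : act (GX 1 0) 1 = 0.
Hypothesis qn0 : q != 0.
Hypothesis hprim : N.-primitive_root q.

Local Notation e i := (act (GX i 0) 1).
Local Notation y := (act (GX 0 1) 1).
Local Notation w := (act (GX m.+1 1) 1).

Lemma e_prod i j : act (GX i 0) (e j) = e i * e (i + j).
Proof. by rewrite act_gA mulGX mul0n expr0 scale1r add0n. Qed.

Lemma GXN j : GX N j = GX 0 j.
Proof. by apply: GX_eqmod; rewrite modnn mod0n. Qed.

Lemma eN : e N = 1.
Proof. by rewrite GXN act1. Qed.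

Lemma em1 : e m.+1 = 0.
Proof. by have := e_prod m.+1 1; rewrite g10 act0r addn1 eN mulr1. Qed.

Lemma L_w a : act (GX m.+1 1) a = a * w.
Proof.
have := act_gxM m.+1 a 1; rewrite !mulr1 em1 mulr0 add0r GXN act1.
by [].
Qed.

Lemma L_rec j k a : act (GX j.+1 k) a * w =
  w * act (GX j k) a + q ^+ j.+1 *: act (GX j k.+1) a.
Proof.
have := act_gxA m.+1 (GX j.+1 k) a; rewrite L_w !mulGX mul0n expr0 scale1r mul1n actZl.
rewrite GXN act1 mul1r add1n.
have hm : forall l, GX (m.+1 + j.+1) l = GX j l.
  move=> l; apply: GX_eqmod; by rewrite -addSnnS addnC modnDr.
by rewrite !hm.
Qed.

Lemma L_wq : w = - (q *: y).
Proof.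
have := L_rec 0 0 1; rewrite g10 mul0r act1 mulr1 expr1.
by move/eqP; rewrite eq_sym addr_eq0 => /eqP.
Qed.

Lemma REC j k a : q ^+ j *: act (GX j k.+1) a =
  y * act (GX j k) a - act (GX j.+1 k) a * y.
Proof.
apply: (scalerI qn0); rewrite scalerA -exprS scalerBr scalerAl scalerAr.
have := L_rec j k a; rewrite L_wq mulrN mulNr => ->.
by rewrite addNKr.
Qed.

Lemma qinv i : (i <= N)%N -> q ^+ (N - i) = q ^- i.
Proof.
move=> hi; have qi0 : q ^+ i != 0 by rewrite expf_neq0.
apply: (mulIf qi0); rewrite -exprD subnK // qN mulVf //.
Qed.

Lemma part2 i : (i <= N)%N -> act (GX i 0) y = q ^- i *: (e i * y).
Proof.
move=> hi; have H := congr1 (act (GX i 0)) (REC (N - i)%N 0 1).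
move: H; rewrite actZr actBr !act_gM !e_prod act_gA mulGX mul0n expr0 scale1r.
rewrite subnKC // [(i + _.+1)%N]addnS subnKC // GXN eN mulr1 add0n.
have -> : GX N.+1 0 = GX 1 0 by apply: GX_eqmod; rewrite -addn1 modnDl.
rewrite g10 mulr0 mul0r subr0.
have Hy : act (GX i 0) y * e i = act (GX i 0) y by rewrite -act_gM mulr1.
rewrite Hy => <-; rewrite -qinv //.
Qed.


Lemma part3 i : (2 <= i)%N -> (i <= N - 1)%N ->
  (forall a, act (GX i 0) a = a) -> y = 0.
Proof.
move=> h2 hi h.
have hiN : (i < N)%N by apply: leq_ltn_trans hi _; rewrite subn1.
have := part2 (ltnW hiN); rewrite !h mul1r => /eqP.
rewrite -subr_eq0 -{1}[y]scale1r -scalerBl scaler_eq0 => /orP [|/eqP //].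
rewrite subr_eq0 eq_sym invr_eq1 => /eqP hq.
have : (N %| i)%N by rewrite (prim_order_dvd hprim) hq.
move/dvdn_leq; have i0 : (0 < i)%N by apply: leq_trans h2.
by move/(_ i0); rewrite leqNgt hiN.
Qed.

Fixpoint Qp (z : K) (k : nat) : {poly K} :=
  if k is k'.+1 then Qp z k' * ('X - (z ^+ k')%:P) else 1.

Lemma Qp_coefS z k i : (Qp z k.+1)`_i =
  (if i == 0%N then 0 else (Qp z k)`_i.-1) - (Qp z k)`_i * z ^+ k.
Proof. by rewrite /= mulrBr coefB coefMX coefMC. Qed.

Lemma Qp_hi z k i : (k < i)%N -> (Qp z k)`_i = 0.
Proof.
elim: k i => [|k IH] i hi; first by rewrite /= coef1; case: i hi.
rewrite Qp_coefS (IH i (ltnW hi)) mul0r subr0.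
by case: i hi => // i hi /=; rewrite IH.
Qed.

Lemma Qp_prod z k : Qp z k = \prod_(0 <= i < k) ('X - (z ^+ i)%:P).
Proof. by elim: k => [|k IH]; rewrite ?big_nil // big_nat_recr //= IH. Qed.


Lemma CL (p : K) (pq : p * q = 1) k : forall j a,
  q ^+ (j * k) *: act (GX j k) a =
  \sum_(i < k.+1) (Qp p k)`_i *: (y ^+ i * act (GX (j + (k - i)) 0) a * y ^+ (k - i)).
Proof.
elim: k => [|k IH] j a.
  by rewrite big_ord1 /= coef1 !expr0 !scale1r mul1r mulr1 addn0 muln0 expr0 scale1r.
rewrite mulnSr exprD -scalerA REC scalerBr scalerAr scalerAl IH.
have E : q ^+ (j * k) = p ^+ k * q ^+ (j.+1 * k).
  by rewrite mulSn exprD mulrA -exprMn pq expr1n mul1r.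
rewrite E -scalerA IH.
under [in RHS]eq_bigr => i _ do rewrite Qp_coefS scalerBl.
rewrite sumrB; congr (_ - _).
  rewrite [RHS]big_ord_recl /= scale0r add0r mulr_sumr; apply: eq_bigr => i _.
  have -> : bump 0 i = i.+1 by [].
  by rewrite /= subSS -scalerAr exprS !mulrA.
rewrite [RHS]big_ord_recr /= Qp_hi // mul0r scale0r addr0.
rewrite scaler_sumr mulr_suml; apply: eq_bigr => i _.
have hi : (i <= k)%N by rewrite -ltnS ltn_ord.
rewrite subSn // addnS -addSn exprSr !mulrA scalerA [p ^+ k * _]mulrC.
by rewrite -scalerAl.
Qed.


Lemma part1 a : y ^+ N * a = a * y ^+ N.
Proof.
have pq : q ^+ m.+1 * q = 1 by rewrite -exprSr qN.
have primp : N.-primitive_root (q ^+ m.+1) by rewrite prim_root_exp_coprime // coprimenS.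
have QpN : Qp (q ^+ m.+1) N = 'X^N - 1 by rewrite Qp_prod factor_Xn_sub_1.
have := CL pq N 0 a; rewrite mul0n expr0 scale1r GX_big // act0l QpN.
under eq_bigr do rewrite coefB coefXn coef1 scalerBl.
rewrite sumrB big_ord_recr /= eqxx scale1r big1; last first.
  by move=> i _; rewrite /= ltn_eqF ?ltn_ord // scale0r.
rewrite add0r big_ord_recl /= scale1r big1; last first.
  by move=> i _; rewrite scale0r.
rewrite addr0 subnn addn0 !expr0 mulr1 mul1r add0n GXN !act1.
by move/esym/eqP; rewrite subr_eq0 => /eqP.
Qed.

End Infra.

Theorem corollary3p4 (k : fieldType) (n : nat) (q : k) (A : algType k)
    (act : taft k n -> A -> A) :
  (2 <= n)%N ->
  n.-primitive_root q ->
  partial_action q act ->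
  act (taftGX k n 1 0) 1 = 0 ->
  [/\ (forall a : A,
         act (taftGX k n 0 1) 1 ^+ n * a = a * act (taftGX k n 0 1) 1 ^+ n),
      (forall i : nat, (i <= n - 1)%N ->
         act (taftGX k n i 0) (act (taftGX k n 0 1) 1) =
         q ^- i *: (act (taftGX k n i 0) 1 * act (taftGX k n 0 1) 1))
    & ((exists i : nat, [/\ (2 <= i)%N, (i <= n - 1)%N &
          forall a : A, act (taftGX k n i 0) a = a]) ->
       act (taftGX k n 0 1) 1 = 0)].
Proof.
case: n act => [|[|m]] act // _ hprim PA g10.
have qN := prim_expr_order hprim.
have qn0 : q != 0 by rewrite (prim_root_eq0 hprim).
split.
- exact: (part1 qN PA g10 qn0 hprim).
- move=> i hi; apply: (part2 qN PA g10 qn0).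
  by apply: leq_trans hi (leq_subr 1 _).
- by case=> i [h2 hi h]; apply: (part3 qN PA g10 qn0 hprim h2 hi h).
Qed.
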